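(* Let $E$ be a finite set and let $\nu\colon 2^E\to\mathbb{R}\cup\{-\infty\}$ be an $\mathrm{M}^\natural$-concave function with $\nu(S)\ne-\infty$ for every $S\subseteq E$ with $|S|\le 2$. Then for any $0<q\le1$, the function \[ d(i,j)=\begin{cases}2q^{-\nu(\{i,j\})+\nu(\{i\})+\nu(\{j\})-\nu(\varnothing)}, & i\ne j,\\ 0,& i=j,\end{cases} \] is an ultrametric on $E$ of radius at most $1$, i.e. $d(i,j)\le\max\{d(i,k),d(k,j)\}$ for all $i,j,k\in E$ and $d(i,j)\le 2$ for all $i,j\in E$.
   Context: A function $\nu\colon 2^E\to\mathbb{R}\cup\{-\infty\}$ is $\mathrm{M}^\natural$-concave if for any $I_1,I_2\subseteq E$ and $i_1\in I_1\setminus I_2$, either $\nu(I_1)+\nu(I_2)\le \nu(I_1\setminus i_1)+\nu(I_2\cup i_1)$, or there is $i_2\in I_2\setminus I_1$ with $\nu(I_1)+\nu(I_2)\le \nu((I_1\setminus i_1)\cup i_2)+\nu((I_2\setminus i_2)\cup i_1)$. The radius of an ultrametric is half its diameter (maximum distance). *)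

(* Defs.v *)
From HB Require Import structures.
From mathcomp Require Import all_boot all_order all_algebra.
From mathcomp Require Import boolp reals.
From mathcomp Require Import ereal exp.
Set Implicit Arguments. Unset Strict Implicit. Unset Printing Implicit Defensive.
Import Order.TTheory GRing.Theory Num.Theory.
Local Open Scope ring_scope.
Local Open Scope ereal_scope.

(* A set function nu : 2^E -> R ∪ {-oo} is represented as nu : {set E} -> \bar R
   together with the requirement that nu never takes the value +oo. *)
Definition valued_in_R_minfty (R : realType) (E : finType) (nu : {set E} -> \bar R) :=
  forall S : {set E}, nu S != +oo.

Definition Mnat_concave (R : realType) (E : finType) (nu : {set E} -> \bar R) :=
  forall (I1 I2 : {set E}) (i1 : E), i1 \in I1 :\: I2 ->
    (nu I1 + nu I2 <= nu (I1 :\ i1) + nu (i1 |: I2))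
    \/ exists2 i2, i2 \in I2 :\: I1 &
         nu I1 + nu I2 <= nu (i2 |: (I1 :\ i1)) + nu (i1 |: (I2 :\ i2)).

Local Close Scope ereal_scope.

(* The distance d(i,j) = 2 q^{-nu({i,j}) + nu({i}) + nu({j}) - nu(∅)} for i != j,
   and 0 for i = j.  `fine` extracts the real value (all involved values are
   finite by hypothesis). *)
Definition dist_nu (R : realType) (E : finType) (nu : {set E} -> \bar R) (q : R)
    (i j : E) : R :=
  if i == j then 0
  else 2 * q `^ (- fine (nu [set i; j]) + fine (nu [set i]) + fine (nu [set j])
                 - fine (nu (set0 : {set E}))).

(* Main.v *)
Require Import Defs.
From HB Require Import structures.
From mathcomp Require Import all_boot all_order all_algebra.
From mathcomp Require Import boolp reals.
From mathcomp Require Import ereal exp.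
From mathcomp Require Import lra.
Import Order.TTheory GRing.Theory Num.Theory.
Local Open Scope ring_scope.

Theorem lemma3p3 (R : realType) (E : finType) (nu : {set E} -> \bar R)
  (Hval : valued_in_R_minfty nu) (Hconc : Mnat_concave nu)
  (Hfin : forall S : {set E}, (#|S| <= 2)%N -> nu S != -oo%E)
  (q : R) (hq0 : 0 < q) (hq1 : q <= 1) :
  [/\ (forall i : E, dist_nu nu q i i = 0),
      (forall i j : E, i != j -> 0 < dist_nu nu q i j),
      (forall i j : E, dist_nu nu q i j = dist_nu nu q j i),
      (forall i j k : E, dist_nu nu q i j <= Num.max (dist_nu nu q i k) (dist_nu nu q k j))
    & (forall i j : E, dist_nu nu q i j <= 2)].
Proof.
have fK : forall S : {set E}, (#|S| <= 2)%N -> nu S = (fine (nu S))%:E.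
  by move=> S hS; rewrite fineK // fin_numE Hfin // Hval.
have c0 : nu set0 = (fine (nu set0))%:E by apply: fK; rewrite cards0.
have c1 : forall i, nu [set i] = (fine (nu [set i]))%:E by move=> i; apply: fK; rewrite cards1.
have c2 : forall i j, nu [set i; j] = (fine (nu [set i; j]))%:E.
  by move=> i j; apply: fK; rewrite cards2; case: (i != j).
have qq : 0 < q <= 1 by rewrite hq0 hq1.
have HA : forall i j, i != j ->
    fine (nu [set i; j]) + fine (nu set0) <= fine (nu [set i]) + fine (nu [set j]).
  move=> i j ij.
  have mem : i \in [set i; j] :\: set0 by rewrite setD0 !inE eqxx.
  case: (Hconc _ _ _ mem) => [|[i2 Hi2 _]]; last by rewrite set0D inE in Hi2.
  have -> : [set i; j] :\ i = [set j] by rewrite setU1K // inE.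
  rewrite setU0 (c2 i j) c0 (c1 i) (c1 j) -!EFinD lee_fin => h; lra.
have HB : forall i j k, i != j -> i != k -> k != j ->
    (fine (nu [set i; j]) + fine (nu [set k]) <= fine (nu [set j]) + fine (nu [set i; k]))
    \/ (fine (nu [set i; j]) + fine (nu [set k]) <= fine (nu [set k; j]) + fine (nu [set i])).
  move=> i j k ij ik kj.
  have mem : i \in [set i; j] :\: [set k] by rewrite !inE eqxx (negbTE ik).
  case: (Hconc _ _ _ mem) => [|[i2]].
    have -> : [set i; j] :\ i = [set j] by rewrite setU1K // inE.
    rewrite (c2 i j) (c1 k) (c1 j) (c2 i k) -!EFinD lee_fin => h; left; lra.
  move=> Hi2; move: Hi2; rewrite !inE => /andP[_ /eqP ->].
  have -> : [set i; j] :\ i = [set j] by rewrite setU1K // inE.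
  rewrite setDv setU0 (c2 i j) (c1 k) (c2 k j) (c1 i) -!EFinD lee_fin => h; right; lra.
have Hd : forall i j, i != j -> dist_nu nu q i j = 2 * q `^ (- fine (nu [set i; j]) + fine (nu [set i]) + fine (nu [set j])
                 - fine (nu (set0 : {set E}))).
  by move=> i j ij; rewrite /dist_nu (negbTE ij).
have d0 : forall i j, 0 <= dist_nu nu q i j.
  move=> i j; rewrite /dist_nu; case: (i == j) => //.
  by rewrite mulr_ge0 // powR_ge0.
split.
- by move=> i; rewrite /dist_nu eqxx.
- by move=> i j ij; rewrite Hd // mulr_gt0 // powR_gt0.
- move=> i j; rewrite /dist_nu eq_sym; case: (j == i) => //.
  rewrite setUC; congr (_ * _ `^ _); lra.
- move=> i j k.
  have [->|ij] := eqVneq i j; first by rewrite /dist_nu eqxx le_max d0.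
  have [<-|ik] := eqVneq i k; first by rewrite le_max lexx orbT.
  have [->|kj] := eqVneq k j; first by rewrite le_max lexx.
  rewrite !Hd // le_max.
  case: (HB i j k ij ik kj) => h; apply/orP; [left|right];
    rewrite ler_pM2l //; apply: ger_powR => //; lra.
- move=> i j; have [->|ij] := eqVneq i j; first by rewrite /dist_nu eqxx.
  rewrite Hd // -[X in _ <= X]mulr1 ler_pM2l //.
  rewrite -[X in _ <= X](powRr0 q); apply: (ger_powR qq).
  have := HA i j ij; lra.
Qed.
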